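(* Let $\Gamma$ be a distance-regular graph with classical parameters $(D,b,\alpha,\beta)$ such that $b\ge2$, $b-1\ge\alpha\ge1$ and $D\ge3$, geometric with respect to a set $\mathcal C$ of Delsarte cliques (members of $\mathcal C$ are called lines). Let $r=[D]$. Assume that for every vertex $x$ the local graph at $x$ is the $\alpha$-clique extension of a $\frac{\beta}{\alpha}\times r$-grid, and assume $\beta>\alpha r$. Let $M$ be an assembly and $x$ a vertex at distance 2 from $M$. Let $B=\Gamma_2(x)\cap M$ and $L(B)=\{\ell\cap B : \ell\in\mathcal C,\ |\ell\cap B|\ge 2\}$. Then $(B,L(B))$ is a $2$-$(\alpha(b+1)+1,\alpha+1,1)$-design. In particular $\alpha+1$ divides $b(b+1)$.
   Context: Distance-regular graph with intersection numbers $b_i,c_i$, valency $k=b_0$; $\Gamma_i(x)$ is the set of vertices at distance $i$ from $x$. For integer $b\ne1$, $[j]=\frac{b^j-1}{b-1}$. Classical parameters $(D,b,\alpha,\beta)$: diameter $D$, $b_i=([D]-[i])(\beta-\alpha[i])$, $c_i=[i](1+\alpha[i-1])$. A Delsarte clique is a clique with $1+\frac{k}{-\theta_{\min}}$ vertices, $\theta_{\min}$ the smallest adjacency eigenvalue; geometric with respect to $\mathcal C$ means every edge lies in exactly one member of $\mathcal C$. An assembly is a maximal clique of $\Gamma$ not in $\mathcal C$. $d(x,M)=\min_{y\in M}d(x,y)$. The $m\times n$-grid is $K_m\Box K_n$; the $s$-clique extension of $\Delta$ replaces each vertex by an $s$-clique, vertices in distinct cliques adjacent iff the original vertices are adjacent.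 A $t$-$(v,k,\lambda)$-design is a pair $(\mathcal P,\mathcal B)$ with $|\mathcal P|=v$, $\mathcal B$ a set of $k$-subsets of $\mathcal P$, such that every $t$-subset of $\mathcal P$ lies in exactly $\lambda$ members of $\mathcal B$. *)

(* Defs.v *)
From HB Require Import structures.
From mathcomp Require Import all_boot all_order all_algebra.
From mathcomp Require Import algC.
Set Implicit Arguments. Unset Strict Implicit. Unset Printing Implicit Defensive.
Import Order.TTheory GRing.Theory Num.Theory.

Section Graphs.
Variable T : finType.
Variable adj : rel T.

Definition simple_graph : Prop := symmetric adj /\ irreflexive adj.

Fixpoint ball (n : nat) (x : T) : {set T} :=
  match n with
  | 0 => [set x]
  | n'.+1 => ball n' x :|: [set y | [exists z in ball n' x, adj z y]]
  end.

Definition Gamma (i : nat) (x : T) : {set T} :=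
  match i with
  | 0 => [set x]
  | i'.+1 => ball i'.+1 x :\: ball i' x
  end.

Definition qint (b j : nat) : nat := (b ^ j - 1) %/ (b - 1).

Definition has_diameter (D : nat) : Prop :=
  (forall x y : T, y \in ball D x) /\ (exists x y : T, y \in Gamma D x).

Definition distance_regular (D : nat) (bi ci : nat -> nat) : Prop :=
  simple_graph /\ has_diameter D /\
  (forall i x y, i <= D -> y \in Gamma i x ->
      #|Gamma i.+1 x :&: Gamma 1 y| = bi i) /\
  (forall i x y, 1 <= i <= D -> y \in Gamma i x ->
      #|Gamma i.-1 x :&: Gamma 1 y| = ci i).

Definition classical_parameters (D b alpha beta : nat) : Prop :=
  exists bi ci : nat -> nat,
    distance_regular D bi ci /\
    (forall i : nat, i <= D ->
       ((bi i)%:Z = ((qint b D)%:Z - (qint b i)%:Z) *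
                    (beta%:Z - alpha%:Z * (qint b i)%:Z))%R) /\
    (forall i : nat, 1 <= i <= D ->
       ci i = qint b i * (1 + alpha * qint b i.-1)).

Definition is_clique (S : {set T}) : Prop :=
  forall u v, u \in S -> v \in S -> u != v -> adj u v.

Definition adj_mx : 'M[algC]_#|T| :=
  (\matrix_(i, j) (adj (enum_val i) (enum_val j))%:R)%R.

Definition min_eigenvalue (theta : algC) : Prop :=
  eigenvalue adj_mx theta /\
  (forall theta', eigenvalue adj_mx theta' -> (theta <= theta')%R).

(* Delsarte clique (k the valency) *)
Definition delsarte_clique (k : nat) (S : {set T}) : Prop :=
  is_clique S /\
  exists theta : algC, min_eigenvalue theta /\
    (#|S|%:R = 1 + k%:R / (- theta))%R.

Definition geometric (k : nat) (C : {set {set T}}) : Prop :=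
  (forall l, l \in C -> delsarte_clique k l) /\
  (forall x y, adj x y -> #|[set l in C | (x \in l) && (y \in l)]| = 1).

Definition maximal_clique (M : {set T}) : Prop :=
  is_clique M /\ forall v, v \notin M -> ~ is_clique (v |: M).

Definition assembly (C : {set {set T}}) (M : {set T}) : Prop :=
  maximal_clique M /\ M \notin C.

Definition dist_set_2 (x : T) (M : {set T}) : Prop :=
  (exists2 y, y \in M & y \in Gamma 2 x) /\
  (forall y, y \in M -> y \notin ball 1 x).

End Graphs.

Definition grid_adj (m n : nat) : rel ('I_m * 'I_n) :=
  fun u v => ((u.1 == v.1) && (u.2 != v.2)) || ((u.1 != v.1) && (u.2 == v.2)).

Definition clique_ext_adj (V : finType) (e : rel V) (s : nat) : rel (V * 'I_s) :=
  fun u v => ((u.1 == v.1) && (u.2 != v.2)) || e u.1 v.1.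

Definition local_graph_iso (T W : finType) (adj : rel T) (x : T) (f : rel W) : Prop :=
  exists phi : W -> T,
    injective phi /\ [set w | w in codom phi] = Gamma adj 1 x /\
    (forall u v, adj (phi u) (phi v) = f u v).

Definition is_design (T : finType) (t v k lambda : nat)
    (P : {set T}) (B : {set {set T}}) : Prop :=
  #|P| = v /\
  (forall blk, blk \in B -> blk \subset P /\ #|blk| = k) /\
  (forall S : {set T}, S \subset P -> #|S| = t ->
     #|[set blk in B | S \subset blk]| = lambda).

Definition lines_on (T : finType) (C : {set {set T}}) (B : {set T}) : {set {set T}} :=
  [set l :&: B | l in C & 2 <= #|l :&: B|].

Arguments grid_adj : clear implicits.
Arguments clique_ext_adj {V} e s.

(* Main.v *)
Require Import Defs.
From HB Require Import structures.
From mathcomp Require Import all_boot all_order all_algebra.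
From mathcomp Require Import algC.
From mathcomp Require Import ring zify.
Set Implicit Arguments. Unset Strict Implicit. Unset Printing Implicit Defensive.
Import Order.TTheory GRing.Theory Num.Theory.

Section GraphBasics.
Variables (T : finType) (adj : rel T).
Hypothesis adj_sym : symmetric adj.
Hypothesis adj_irr : irreflexive adj.

Lemma ballS n x y : (y \in ball adj n.+1 x) = (y \in ball adj n x) || [exists z in ball adj n x, adj z y].
Proof. by rewrite /= !inE. Qed.

Lemma ball_mono n x y : y \in ball adj n x -> y \in ball adj n.+1 x.
Proof. by move=> h; rewrite ballS h. Qed.

Lemma ball_step n x y z : y \in ball adj n x -> adj y z -> z \in ball adj n.+1 x.
Proof. by move=> h e; rewrite ballS; apply/orP; right; apply/existsP; exists y; rewrite h. Qed.

Lemma ball0 x y : (y \in ball adj 0 x) = (y == x).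
Proof. by rewrite /= inE. Qed.

Lemma G1E x y : (y \in Gamma adj 1 x) = adj x y.
Proof.
rewrite /Gamma inE ballS ball0.
apply/andP/idP => [[ne /orP [/eqP e|/existsP [z /andP [hz e]]]]|e].
- by rewrite e eqxx in ne.
- by move: hz; rewrite ball0 => /eqP <-.
- split; first by apply/eqP => yx; move: e; rewrite yx adj_irr.
  by apply/orP; right; apply/existsP; exists x; rewrite ball0 eqxx.
Qed.

Lemma G1_ball1 x y : y \in Gamma adj 1 x -> y \in ball adj 1 x.
Proof. by rewrite /Gamma inE => /andP []. Qed.

Lemma GSE i x y : (y \in Gamma adj i.+1 x) = (y \in ball adj i.+1 x) && (y \notin ball adj i x).
Proof. by rewrite /Gamma inE andbC. Qed.

Lemma ball1_2 x y : y \in ball adj 1 x -> y \in ball adj 2 x.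
Proof. exact: ball_mono. Qed.

End GraphBasics.

Lemma clique_subset (T : finType) (adj : rel T) (A B : {set T}) :
  is_clique adj A -> B \subset A -> is_clique adj B.
Proof. by move=> hA sBA u v uB vB; apply: hA; apply: (subsetP sBA). Qed.

Lemma other_ord n (j : 'I_n) : 1 < n -> exists j' : 'I_n, j' != j.
Proof.
move=> n2; have h0 : 0 < n by apply: ltn_trans n2.
case: j => [[|k] hk].
- by exists (Ordinal n2).
- by exists (Ordinal h0).
Qed.

Lemma count_proj (X : finType) (n : nat) (U : {set X}) (g : X -> 'I_n) c :
  (forall j, (exists2 u, u \in U & g u = j) -> #|[set u in U | g u == j]| = c) ->
  #|U| = #|[set j | [exists u in U, g u == j]]| * c.
Proof.
move=> H; rewrite -sum1_card (partition_big g xpredT) //=.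
rewrite -sum_nat_const [RHS]big_mkcond /=; apply: eq_bigr => j _.
rewrite inE; case: existsP => [[u /andP [uU /eqP e]]|nex].
- by rewrite -(H j); [rewrite sum1dep_card | exists u].
- apply: big_pred0 => i; apply/negP => /andP [iU e]; apply: nex.
  by exists i; rewrite iU.
Qed.

Lemma dcount (X Y : finType) (A : {set X}) (F : {set Y}) (R : X -> Y -> bool) :
  \sum_(x in A) #|[set y in F | R x y]| = \sum_(y in F) #|[set x in A | R x y]|.
Proof.
transitivity (\sum_(x in A) \sum_(y in F) (R x y : nat)).
  apply: eq_bigr => x _; rewrite -sum1_card big_mkcond /= [RHS]big_mkcond.
  by apply: eq_bigr => y _; rewrite inE; case: (y \in F); case: (R x y).
rewrite exchange_big /=; apply: eq_bigr => y _.
rewrite -sum1_card [RHS]big_mkcond /= big_mkcond.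
by apply: eq_bigr => x _; rewrite inE; case: (x \in A); case: (R x y).
Qed.

Lemma design_rep (X : finType) v k (P : {set X}) (Bl : {set {set X}}) q :
  is_design 2 v k 1 P Bl -> q \in P -> #|[set blk in Bl | q \in blk]| * k.-1 = v.-1.
Proof.
case=> cP [hB hl] qP.
have e1 : v.-1 = #|P :\ q| by rewrite -cP (cardsD1 q P) qP.
rewrite e1; symmetry.
transitivity (\sum_(y in P :\ q) #|[set blk in [set blk in Bl | q \in blk] | y \in blk]|).
  rewrite -[#|P :\ q|]sum1_card; apply: eq_bigr => y; rewrite !inE => /andP [yq yP].
  rewrite -(hl [set q; y]); symmetry.
  - by apply: eq_card => blk; rewrite !inE subUset !sub1set andbA.
  - by rewrite subUset !sub1set qP yP.
  - by rewrite cards2 eq_sym yq.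
rewrite dcount -sum_nat_const; apply: eq_bigr => blk; rewrite inE => /andP [bB qb].
have [sb cb] := hB blk bB.
have -> : [set y in P :\ q | y \in blk] = blk :\ q.
  apply/setP => y; rewrite !inE; case: (eqVneq y q) => //= _.
  by case yb: (y \in blk); rewrite ?andbF // (subsetP sb).
by rewrite -cb (cardsD1 q blk) qb.
Qed.

Lemma design_total (X : finType) v k rq (P : {set X}) (Bl : {set {set X}}) :
  is_design 2 v k 1 P Bl -> (forall q, q \in P -> #|[set blk in Bl | q \in blk]| = rq) ->
  #|Bl| * k = v * rq.
Proof.
case=> cP [hB hl] hr.
transitivity (\sum_(blk in Bl) #|[set y in P | y \in blk]|).
  rewrite -sum_nat_const; apply: eq_bigr => blk bB.
  have [sb cb] := hB blk bB; rewrite -cb; apply: eq_card => y.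
  by rewrite inE; case yb: (y \in blk); rewrite ?andbF ?andbT // (subsetP sb).
rewrite -dcount -cP -sum_nat_const; apply: eq_bigr => y yP.
by rewrite hr.
Qed.

Section Local.
Variables (T : finType) (adj : rel T) (m r al : nat).
Hypothesis adj_sym : symmetric adj.
Hypothesis adj_irr : irreflexive adj.
Hypothesis m2 : 1 < m.
Hypothesis r2 : 1 < r.
Hypothesis al1 : 0 < al.
Hypothesis rm : r < m.

Lemma G1 x y : (y \in Gamma adj 1 x) = adj x y.
Proof. exact: G1E. Qed.

Local Notation W := (('I_m * 'I_r) * 'I_al)%type.
Definition fW : rel W := clique_ext_adj (grid_adj m r) al.

Lemma fWE (u v : W) : fW u v = (u != v) && ((u.1.1 == v.1.1) || (u.1.2 == v.1.2)).
Proof.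
case: u => [[i j] a]; case: v => [[i' j'] a'].
rewrite /fW /clique_ext_adj /grid_adj /=.
rewrite !xpair_eqE.
by case: (i =P i'); case: (j =P j'); case: (a =P a').
Qed.

Definition rowW (i : 'I_m) : {set W} := [set u : W | u.1.1 == i].
Definition colW (j : 'I_r) : {set W} := [set u : W | u.1.2 == j].

Lemma card_row i : #|rowW i| = r * al.
Proof.
have -> : rowW i = setX (setX [set i] setT) setT.
  by apply/setP => u; rewrite !inE !andbT.
by rewrite !cardsX cards1 !cardsT !card_ord mul1n.
Qed.

Lemma card_col j : #|colW j| = m * al.
Proof.
have -> : colW j = setX (setX setT [set j]) setT.
  by apply/setP => u; rewrite !inE /= andbT.
by rewrite !cardsX cards1 !cardsT !card_ord muln1.
Qed.

Lemma card_rc i j : #|rowW i :&: colW j| = al.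
Proof.
have -> : rowW i :&: colW j = setX [set (i, j)] setT.
  by apply/setP => [[[i' j'] a]]; rewrite !inE /= xpair_eqE andbT.
by rewrite !cardsX cards1 !cardsT !card_ord mul1n.
Qed.

Lemma clique_W (Q : {set W}) :
  (forall u v, u \in Q -> v \in Q -> u != v -> fW u v) ->
  (exists i, Q \subset rowW i) \/ (exists j, Q \subset colW j).
Proof.
move=> hQ.
case: (boolP [exists u in Q, exists v in Q, u.1.1 != v.1.1]).
- case/existsP => u /andP [uQ /existsP [v /andP [vQ ne]]].
  right; exists u.1.2; apply/subsetP => w wQ; rewrite inE.
  have huv : u.1.2 == v.1.2.
    have uv : u != v by apply: contra ne => /eqP ->.
    by have := hQ u v uQ vQ uv; rewrite fWE (negbTE ne) uv.
  case: (eqVneq w u) => [->//|wu].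
  case: (eqVneq w v) => [->|wv]; first by rewrite eq_sym.
  have := hQ w u wQ uQ wu; rewrite fWE wu /= => /orP [/eqP e1|]; last by rewrite eq_sym.
  have := hQ w v wQ vQ wv; rewrite fWE wv /= => /orP [/eqP e2|/eqP e2].
  + by move: ne; rewrite -e1 -e2 eqxx.
  + by rewrite (eqP huv) e2.
- move=> hn; left.
  case: (pickP (mem Q)) => [u0 u0Q|Q0].
  + exists u0.1.1; apply/subsetP => w wQ; rewrite inE.
    apply/negPn; apply: contra hn => ne; apply/existsP; exists w; rewrite wQ /=.
    by apply/existsP; exists u0; rewrite [u0 \in Q]u0Q.
  + exists (Ordinal (ltn_trans (isT : 0 < 1) m2)); apply/subsetP => w wQ.
    by have := Q0 w; rewrite -[mem Q w]/(w \in Q) wQ.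
Qed.

Variable phis : T -> W -> T.
Hypothesis chart : forall y, injective (phis y) /\
  [set w | w in codom (phis y)] = Gamma adj 1 y /\
  forall u v, adj (phis y u) (phis y v) = fW u v.

Lemma phis_inj y : injective (phis y).
Proof. by case: (chart y). Qed.

Lemma phis_adj y u v : adj (phis y u) (phis y v) = fW u v.
Proof. by case: (chart y) => _ []. Qed.

Lemma inG1 y z : z \in Gamma adj 1 y -> exists u, z = phis y u.
Proof.
case: (chart y) => _ [<- _] => /imsetP [w /codomP [u ->] ->].
by exists u.
Qed.

Lemma phis_G1 y u : phis y u \in Gamma adj 1 y.
Proof.
case: (chart y) => _ [<- _]; apply/imsetP; exists (phis y u) => //.
by rewrite codom_f.
Qed.

Lemma adj_phis y u : adj y (phis y u).
Proof. by have := phis_G1 y u; rewrite G1. Qed.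

Lemma phis_neq y u : phis y u != y.
Proof. by apply/eqP => e; have := adj_phis y u; rewrite e adj_irr. Qed.

Lemma y_notin_img y (A : {set W}) : y \notin phis y @: A.
Proof. by apply/imsetP => [[u _ e]]; have := phis_neq y u; rewrite -e eqxx. Qed.

Lemma card_yimg y (A : {set W}) : #|y |: phis y @: A| = #|A|.+1.
Proof. by rewrite cardsU1 y_notin_img card_imset //; exact: phis_inj. Qed.

Lemma in_yimg y (A : {set W}) z :
  z \in y |: phis y @: A -> z = y \/ exists2 u, u \in A & z = phis y u.
Proof.
rewrite in_setU1 => /orP [/eqP ->|/imsetP [u uA ->]]; [by left | by right; exists u].
Qed.

Lemma mem_img y (A : {set W}) u : (phis y u \in phis y @: A) = (u \in A).
Proof. by rewrite mem_imset //; exact: phis_inj. Qed.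

Definition Rc y i := y |: phis y @: rowW i.
Definition Kc y j := y |: phis y @: colW j.

Lemma card_Rc y i : #|Rc y i| = (r * al).+1.
Proof. by rewrite card_yimg card_row. Qed.
Lemma card_Kc y j : #|Kc y j| = (m * al).+1.
Proof. by rewrite card_yimg card_col. Qed.

Lemma clique_yimg y (A : {set W}) :
  (forall u v, u \in A -> v \in A -> u != v -> fW u v) -> is_clique adj (y |: phis y @: A).
Proof.
move=> hA z1 z2 /in_yimg [->|[u uA ->]] /in_yimg [->|[v vA ->]].
- by rewrite eqxx.
- by move=> _; apply: adj_phis.
- by move=> _; rewrite adj_sym; apply: adj_phis.
- move=> ne; rewrite phis_adj; apply: hA => //.
  by apply: contra ne => /eqP ->.
Qed.

Lemma clique_Rc y i : is_clique adj (Rc y i).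
Proof.
apply: clique_yimg => u v; rewrite !inE => /eqP hu /eqP hv ne.
by rewrite fWE ne hu hv eqxx.
Qed.

Lemma clique_Kc y j : is_clique adj (Kc y j).
Proof.
apply: clique_yimg => u v; rewrite !inE => /eqP hu /eqP hv ne.
by rewrite fWE ne hu hv eqxx orbT.
Qed.

Lemma max_Rc y i : maximal_clique adj (Rc y i).
Proof.
split; first exact: clique_Rc.
move=> z zn hc.
have zy : z != y by apply: contra zn => /eqP ->; rewrite setU11.
have : adj y z.
  by apply: hc; [rewrite /Rc !in_setU1 eqxx orbT | rewrite setU11 | rewrite eq_sym].
move=> ayz; have [u zu] : exists u, z = phis y u by apply: inG1; rewrite G1.
have uR : u \notin rowW i.
  by apply: contra zn => uR; rewrite zu inE mem_img uR orbT.
have [j' nj'] := other_ord u.1.2 r2.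
pose w : W := ((i, j'), Ordinal al1).
have ne : phis y w != z.
  by rewrite zu; apply: contra uR => /eqP /phis_inj <-; rewrite inE.
have : adj z (phis y w).
  apply: hc; [by rewrite setU11 | | by rewrite eq_sym].
  by rewrite /Rc !in_setU1 mem_img inE eqxx !orbT.
rewrite zu phis_adj fWE /= => /andP [_ /orP [/eqP e|/eqP e]].
- by move: uR; rewrite inE e eqxx.
- by rewrite e eqxx in nj'.
Qed.

Lemma max_Kc y j : maximal_clique adj (Kc y j).
Proof.
split; first exact: clique_Kc.
move=> z zn hc.
have zy : z != y by apply: contra zn => /eqP ->; rewrite setU11.
have : adj y z.
  by apply: hc; [rewrite /Kc !in_setU1 eqxx orbT | rewrite setU11 | rewrite eq_sym].
move=> ayz; have [u zu] : exists u, z = phis y u by apply: inG1; rewrite G1.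
have uK : u \notin colW j.
  by apply: contra zn => uK; rewrite zu inE mem_img uK orbT.
have [i' ni'] := other_ord u.1.1 m2.
pose w : W := ((i', j), Ordinal al1).
have ne : phis y w != z.
  by rewrite zu; apply: contra uK => /eqP /phis_inj <-; rewrite inE.
have : adj z (phis y w).
  apply: hc; [by rewrite setU11 | | by rewrite eq_sym].
  by rewrite /Kc !in_setU1 mem_img inE eqxx !orbT.
rewrite zu phis_adj fWE /= => /andP [_ /orP [/eqP e|/eqP e]].
- by rewrite e eqxx in ni'.
- by move: uK; rewrite inE e eqxx.
Qed.

Lemma clique_sub y (Q : {set T}) : is_clique adj Q -> y \in Q ->
  (exists i, Q \subset Rc y i) \/ (exists j, Q \subset Kc y j).
Proof.
move=> hQ yQ.
pose Q' := phis y @^-1: Q.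
have hQ' : forall u v, u \in Q' -> v \in Q' -> u != v -> fW u v.
  move=> u v; rewrite !inE => uQ vQ ne; rewrite -(phis_adj y); apply: hQ => //.
  by apply: contra ne => /eqP /phis_inj ->.
have key : forall A : {set W}, Q' \subset A -> Q \subset y |: phis y @: A.
  move=> A sA; apply/subsetP => z zQ; rewrite in_setU1.
  case: (eqVneq z y) => [_|zy]; first by [].
  have : z \in Gamma adj 1 y by rewrite G1; apply: hQ; rewrite // eq_sym.
  case/inG1 => u zu; rewrite zu mem_img /=; apply: (subsetP sA).
  by rewrite inE -zu.
case: (clique_W hQ') => [[i si]|[j sj]].
- by left; exists i; apply: key.
- by right; exists j; apply: key.
Qed.

Lemma max_eq (Q S : {set T}) : maximal_clique adj Q -> is_clique adj S ->
  Q \subset S -> Q = S.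
Proof.
move=> [hQ mQ] hS sQS; apply/eqP; rewrite eqEsubset sQS /=.
apply/subsetP => z zS; apply/negPn/negP => zQ; apply: (mQ z zQ).
apply: (clique_subset hS); by rewrite subUset sub1set zS.
Qed.

Lemma locmax y (Q : {set T}) : maximal_clique adj Q -> y \in Q ->
  (exists i, Q = Rc y i) \/ (exists j, Q = Kc y j).
Proof.
move=> hQ yQ; case: (clique_sub hQ.1 yQ) => [[i s]|[j s]].
- by left; exists i; apply: max_eq => //; exact: clique_Rc.
- by right; exists j; apply: max_eq => //; exact: clique_Kc.
Qed.


Lemma Kc_inj x : injective (Kc x).
Proof.
move=> j j' e.
pose u : W := ((Ordinal (ltn_trans (isT : 0 < 1) m2), j), Ordinal al1).
have : phis x u \in Kc x j' by rewrite -e /Kc in_setU1 mem_img // inE eqxx orbT.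
rewrite /Kc in_setU1 (negbTE (phis_neq x u)) mem_img // inE /=.
by move/eqP.
Qed.

Lemma Kc_neq_Rc x y i j : Kc x j != Rc y i.
Proof.
apply/eqP => e; have := card_Kc x j; rewrite e card_Rc.
move/eqP; rewrite eqSS eqn_pmul2r // => /eqP er.
by move: rm; rewrite er ltnn.
Qed.

Definition Big : {set {set T}} := [set S | [exists y, exists j, S == Kc y j]].

Lemma Big_at x : [set S in Big | x \in S] = Kc x @: setT.
Proof.
apply/setP => S; rewrite !inE; apply/andP/imsetP.
- case=> /existsP [y /existsP [j /eqP ->]] xK.
  have [[i e]|[j' e]] := locmax (max_Kc y j) xK.
  + by move: (Kc_neq_Rc y x i j); rewrite e eqxx.
  + by exists j'.
- case=> j _ ->; split; last by rewrite /Kc setU11.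
  by apply/existsP; exists x; apply/existsP; exists j.
Qed.

Section EigS.
Local Open Scope ring_scope.

Lemma eig_bound (th : algC) : eigenvalue (adj_mx adj) th -> 0 <= r%:R + th.
Proof.
case/eigenvalueP => v hv vn0.
pose vv (y : T) := v 0 (enum_rank y).
have eq1 : forall z, \sum_(y | adj z y) vv y = th * vv z.
  move=> z.
  have := hv; move/rowP => /(_ (enum_rank z)); rewrite !mxE.
  move=> <-.
  have hvj : forall j, v 0 j = vv (enum_val j) by move=> j; rewrite /vv enum_valK.
  under [RHS]eq_bigr => j _ do rewrite /adj_mx mxE enum_rankK hvj.
  rewrite -(big_enum_val (fun y => vv y * (adj y z)%:R)) /= big_mkcond /=.
  by apply: eq_bigr => y _; rewrite adj_sym; case: (adj y z); rewrite ?mulr1 ?mulr0.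
pose s x j := \sum_(y in Kc x j) vv y.
have hs : forall x, \sum_j s x j = (r%:R + th) * vv x.
  move=> x.
  have e1 : forall j, s x j = vv x + \sum_(u in colW j) vv (phis x u).
    move=> j; rewrite /s /Kc big_setU1 ?y_notin_img //= big_imset //.
    by move=> a b _ _; apply: phis_inj.
  under eq_bigr do rewrite e1.
  rewrite big_split /= sumr_const card_ord.
  have -> : \sum_j \sum_(u in colW j) vv (phis x u) = \sum_u vv (phis x u).
    symmetry; rewrite (partition_big (fun u : W => u.1.2) xpredT) //=.
    by apply: eq_bigr => j _; apply: eq_bigl => u; rewrite inE.
  have -> : \sum_u vv (phis x u) = \sum_(y | adj x y) vv y.
    transitivity (\sum_(u in [set: W]) vv (phis x u)).
      by apply: eq_bigl => u; rewrite inE.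
    rewrite -big_imset /=; last by move=> a b _ _; apply: phis_inj.
    apply: eq_bigl => y; apply/imsetP/idP => [[u _ ->]|h]; first exact: adj_phis.
    have [u ->] : exists u, y = phis x u by apply: inG1; rewrite G1.
    by exists u; rewrite ?inE.
  by rewrite (eq1 x) mulrDl mulr_natl.
have inner : forall x, \sum_j (vv x)^* * s x j =
    \sum_(S | (S \in Big) && (x \in S)) (vv x)^* * (\sum_(y in S) vv y).
  move=> x.
  transitivity (\sum_(S in [set S in Big | x \in S]) (vv x)^* * (\sum_(y in S) vv y)); last first.
    by apply: eq_bigl => S; rewrite inE.
  rewrite Big_at big_imset /=; last by move=> a b _ _; apply: Kc_inj.
  by apply: eq_bigl => j; rewrite inE.
have key : \sum_x (vv x)^* * ((r%:R + th) * vv x) =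
    \sum_(S in Big) (\sum_(y in S) vv y)^* * (\sum_(y in S) vv y).
  under eq_bigr => x _ do rewrite -hs mulr_sumr inner.
  rewrite (exchange_big_dep (mem Big)) /=; last by move=> x S _ /andP [].
  apply: eq_bigr => S SB.
  rewrite rmorph_sum mulr_suml; apply: eq_bigl => x.
  by rewrite SB.
have pos : 0 < \sum_x vv x * (vv x)^*.
  case: (pickP (fun j => v 0 j != 0)) => [j vj|h]; last first.
    case/eqP: vn0; apply/rowP => j; rewrite mxE.
    by move: (h j) => /= /negbFE /eqP.
  rewrite (bigD1 (enum_val j)) //=.
  apply: ltr_wpDr; first by apply: sumr_ge0 => y _; exact: mul_conjC_ge0.
  by rewrite mul_conjC_gt0 /vv enum_valK.
rewrite -(pmulr_lge0 _ pos) mulr_sumr.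
have -> : \sum_x (r%:R + th) * (vv x * (vv x)^*) = \sum_x (vv x)^* * ((r%:R + th) * vv x).
  by apply: eq_bigr => x _; rewrite (mulrC (vv x)) mulrCA.
rewrite key; apply: sumr_ge0 => S _.
by rewrite mulrC mul_conjC_ge0.
Qed.
End EigS.


Lemma yimg_eq y (S : {set T}) (A A' : {set W}) : y \in S ->
  (forall u, (phis y u \in S) && (u \in A) = (u \in A')) ->
  S :&: (y |: phis y @: A) = y |: phis y @: A'.
Proof.
move=> yS h; apply/setP => z; rewrite in_setI !in_setU1.
case: (eqVneq z y) => [->|zy]; first by rewrite yS.
case: (boolP (z \in Gamma adj 1 y)) => [/inG1 [v ->]|zn].
- by rewrite !mem_img h.
- have nimg : forall B : {set W}, z \notin phis y @: B.
    by move=> B; apply/imsetP => [[v _ e]]; move: zn; rewrite e phis_G1.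
  by rewrite !(negbTE (nimg _)) andbF.
Qed.

Lemma psi1 (Q : {set T}) w x : maximal_clique adj Q -> w \in Q -> x \notin Q ->
  adj w x -> #|Gamma adj 1 x :&: Q| = al.+1.
Proof.
move=> hQ wQ xQ awx.
have [u xu] : exists u, x = phis w u by apply: inG1; rewrite G1.
have xw : w \in Gamma adj 1 x by rewrite G1 adj_sym.
case: (locmax hQ wQ) => [[i eQ]|[j eQ]]; rewrite eQ /Rc /Kc.
- have uR : u \notin rowW i by apply: contra xQ => uR; rewrite eQ /Rc xu in_setU1 mem_img uR orbT.
  rewrite (@yimg_eq _ _ _ (rowW i :&: colW u.1.2)) // ?card_yimg ?card_rc //.
  move=> v; rewrite xu G1 phis_adj fWE !inE.
  case: (eqVneq v.1.1 i) => [vi|]; rewrite ?andbF ?andbT //.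
  move: uR; rewrite inE -vi => uR.
  rewrite (negbTE uR) /= eq_sym andb_idl //.
  by move=> _; apply: contra uR => /eqP ->.
- have uK : u \notin colW j by apply: contra xQ => uK; rewrite eQ /Kc xu in_setU1 mem_img uK orbT.
  rewrite (@yimg_eq _ _ _ (rowW u.1.1 :&: colW j)) // ?card_yimg ?card_rc //.
  move=> v; rewrite xu G1 phis_adj fWE !inE.
  case: (eqVneq v.1.2 j) => [vj|]; rewrite ?andbF ?andbT //.
  move: uK; rewrite inE -vj => uK.
  rewrite (negbTE uK) orbF eq_sym andb_idl //.
  by move=> _; apply: contra uK => /eqP ->.
Qed.

Section Lines.
Variable C : {set {set T}}.
Hypothesis geom : geometric adj (r * (al * m)) C.

Lemma line_through y z : adj y z -> exists2 l, l \in C & (y \in l) && (z \in l).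
Proof.
move=> ayz; have := geom.2 y z ayz; move/eqP/cards1P => [l e].
have : l \in [set l0 in C | (y \in l0) && (z \in l0)] by rewrite e set11.
by rewrite inE => /andP [lC h]; exists l.
Qed.

Lemma line_uniq y z l1 l2 : adj y z -> l1 \in C -> l2 \in C ->
  y \in l1 -> z \in l1 -> y \in l2 -> z \in l2 -> l1 = l2.
Proof.
move=> ayz l1C l2C y1 z1 y2 z2; have := geom.2 y z ayz; move/eqP/cards1P => [l e].
have h1 : l1 \in [set l0 in C | (y \in l0) && (z \in l0)] by rewrite inE l1C y1 z1.
have h2 : l2 \in [set l0 in C | (y \in l0) && (z \in l0)] by rewrite inE l2C y2 z2.
by move: h1 h2; rewrite e !inE => /eqP -> /eqP ->.
Qed.

Section LS.
Local Open Scope ring_scope.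
Lemma line_size (x0 : T) l : l \in C -> ((al * m).+1 <= #|l|)%N.
Proof.
move=> lC.
pose w0 : W := ((Ordinal (ltn_trans (isT : (0 < 1)%N) m2), Ordinal (ltn_trans (isT : (0 < 1)%N) r2)), Ordinal al1).
have [l0 l0C /andP [x0l zl]] := line_through (adj_phis x0 w0).
have c0 : (2 <= #|l0|)%N.
  have <- : #|[set x0; phis x0 w0]| = 2%N by rewrite cards2 eq_sym phis_neq.
  by apply: subset_leq_card; rewrite subUset !sub1set x0l zl.
have [_ [th0 [[ev0 min0] e0]]] := geom.1 l0 l0C.
have [_ [th [[ev min] e]]] := geom.1 l lC.
have eth : th = th0 by apply: le_anti; rewrite min // min0.
rewrite eth {eth th ev min} in e.
set t := - th0 in e0 e.
set k := (r * (al * m))%N in e0 e.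
have tr : t <= r%:R by rewrite /t -subr_ge0 opprK; exact: eig_bound.
have kt : k%:R / t = (#|l0|.-1)%:R.
  apply: (@addrI _ 1); rewrite -e0 addrC natr1 prednK //.
  exact: ltn_trans _ c0.
have kpos : 0 < k%:R :> algC.
  by rewrite ltr0n /k !muln_gt0 al1 (ltn_trans _ r2) // (ltn_trans _ m2).
have tpos : 0 < t.
  have : 0 < k%:R / t by rewrite kt ltr0n -subn1 subn_gt0.
  by move=> h; rewrite -invr_gt0 -(pmulr_rgt0 _ kpos).
have : (al * m)%:R <= k%:R / t.
  rewrite ler_pdivlMr // /k (natrM _ r) [X in _ <= X]mulrC.
  by rewrite ler_wpM2l // ler0n.
by rewrite -(lerD2l 1) -e addrC natr1 ler_nat.
Qed.
End LS.

Lemma line_Kc l y : l \in C -> y \in l -> exists j, l = Kc y j.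
Proof.
move=> lC yl; have ls := line_size y lC.
have cl := (geom.1 l lC).1.
case: (clique_sub cl yl) => [[i s]|[j s]].
- have := subset_leq_card s; rewrite card_Rc => h.
  move: (leq_trans ls h); rewrite ltnS [r * al]mulnC leq_pmul2l //.
  by rewrite leqNgt rm.
- exists j; apply/eqP; rewrite eqEcard s card_Kc mulnC; exact: ls.
Qed.

Lemma Kc_in_C y j : Kc y j \in C.
Proof.
pose u : W := ((Ordinal (ltn_trans (isT : (0 < 1)%N) m2), j), Ordinal al1).
have [l lC /andP [yl zl]] := line_through (adj_phis y u).
have [j' e] := line_Kc lC yl.
move: zl; rewrite e /Kc in_setU1 (negbTE (phis_neq y u)) mem_img inE /= => /eqP ej.
by rewrite ej -[y |: _]/(Kc y j') -e.
Qed.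

Lemma line_at l y : l \in C -> y \in l -> exists j, l = Kc y j.
Proof. exact: line_Kc. Qed.

End Lines.


Lemma yimg_eq0 y (S : {set T}) (A A' : {set W}) : y \notin S ->
  (forall u, (phis y u \in S) && (u \in A) = (u \in A')) ->
  S :&: (y |: phis y @: A) = phis y @: A'.
Proof.
move=> yS h; apply/setP => z; rewrite in_setI !in_setU1.
case: (eqVneq z y) => [->|zy]; first by rewrite (negbTE yS) (negbTE (y_notin_img y A')).
case: (boolP (z \in Gamma adj 1 y)) => [/inG1 [v ->]|zn].
- by rewrite !mem_img h.
- have nimg : forall B : {set W}, z \notin phis y @: B.
    by move=> B; apply/imsetP => [[v _ e]]; move: zn; rewrite e phis_G1.
  by rewrite !(negbTE (nimg _)) andbF.
Qed.

Section DRG.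
Variable C : {set {set T}}.
Hypothesis geom : geometric adj (r * (al * m)) C.
Variables (x : T) (M : {set T}) (b : nat).
Hypothesis asmM : assembly adj C M.
Hypothesis distM : forall y, y \in M -> y \notin ball adj 1 x.
Hypothesis ex2 : exists2 y, y \in M & y \in Gamma adj 2 x.
Hypothesis c2h : forall p, p \in Gamma adj 2 x ->
  #|Gamma adj 1 x :&: Gamma adj 1 p| = b.+1 * al.+1.
Hypothesis b2h : forall p, p \in Gamma adj 2 x ->
  #|Gamma adj 3 x :&: Gamma adj 1 p| = (r - b.+1) * (al * m - al * b.+1).

Lemma G1_ball2 z : z \in Gamma adj 1 x -> z \in ball adj 2 x.
Proof. by move/G1_ball1; exact: ball_mono. Qed.

Lemma G2_nb1 p : p \in Gamma adj 2 x -> p \notin ball adj 1 x.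
Proof. by rewrite GSE => /andP []. Qed.

Lemma G3_nb2 p : p \in Gamma adj 3 x -> p \notin ball adj 2 x.
Proof. by rewrite GSE => /andP []. Qed.

Lemma x_notin p (A : {set W}) : p \in Gamma adj 2 x -> x \notin p |: phis p @: A.
Proof.
move=> p2; have pn := G2_nb1 p2.
rewrite in_setU1; apply/norP; split.
- apply: contra pn => /eqP <-; apply: ball_mono; by rewrite ball0.
- apply/imsetP => [[u _ e]].
  have := adj_phis p u; rewrite -e adj_sym -(G1 x p) => /G1_ball1.
  by rewrite (negbTE pn).
Qed.

Lemma cnt_col p j : p \in Gamma adj 2 x ->
  (exists2 u, u \in [set u | phis p u \in Gamma adj 1 x] & u.1.2 = j) ->
  #|[set u in [set u | phis p u \in Gamma adj 1 x] | u.1.2 == j]| = al.+1.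
Proof.
move=> p2 [u uU uj].
have := @psi1 (Kc p j) (phis p u) x (max_Kc p j).
rewrite /Kc in_setU1 mem_img inE uj eqxx orbT => /(_ isT (x_notin _ p2)).
move: uU; rewrite inE G1 adj_sym => au /(_ au).
rewrite (@yimg_eq0 _ _ _ [set u in [set u | phis p u \in Gamma adj 1 x] | u.1.2 == j]).
- by rewrite card_imset //; exact: phis_inj.
- by apply/negP => /G1_ball1; apply/negP; apply: G2_nb1.
- by move=> v; rewrite !inE.
Qed.

Lemma cnt_row p i : p \in Gamma adj 2 x ->
  (exists2 u, u \in [set u | phis p u \in Gamma adj 1 x] & u.1.1 = i) ->
  #|[set u in [set u | phis p u \in Gamma adj 1 x] | u.1.1 == i]| = al.+1.
Proof.
move=> p2 [u uU uj].
have := @psi1 (Rc p i) (phis p u) x (max_Rc p i).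
rewrite /Rc in_setU1 mem_img inE uj eqxx orbT => /(_ isT (x_notin _ p2)).
move: uU; rewrite inE G1 adj_sym => au /(_ au).
rewrite (@yimg_eq0 _ _ _ [set u in [set u | phis p u \in Gamma adj 1 x] | u.1.1 == i]).
- by rewrite card_imset //; exact: phis_inj.
- by apply/negP => /G1_ball1; apply/negP; apply: G2_nb1.
- by move=> v; rewrite !inE.
Qed.


Lemma atp p : p \in Gamma adj 2 x :&: M -> exists i0 (J : {set 'I_r}),
  #|J| = b.+1 /\
  Gamma adj 2 x :&: M = p |: phis p @: [set u | (u.1.1 == i0) && (u.1.2 \in J)].
Proof.
case/setIP => p2 pM.
have [i0 eM] : exists i0, M = Rc p i0.
  case: (locmax asmM.1 pM) => [//|[j e]].
  by have := Kc_in_C geom p j; rewrite -e => MC; move: asmM.2; rewrite MC.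
pose U := [set u | phis p u \in Gamma adj 1 x].
have cU : #|U| = b.+1 * al.+1.
  rewrite -(c2h p2).
  have -> : Gamma adj 1 x :&: Gamma adj 1 p = phis p @: U.
    apply/setP => z; rewrite in_setI; apply/andP/imsetP => [[z1 zp]|[v vU ->]].
    - have [v e] := inG1 zp; exists v => //; by rewrite inE -e.
    - by split; [move: vU; rewrite inE | exact: phis_G1].
  by rewrite card_imset //; exact: phis_inj.
pose J := [set j | [exists u in U, u.1.2 == j]].
pose I := [set i | [exists u in U, u.1.1 == i]].
have cJ : #|J| = b.+1.
  have := @count_proj _ _ U (fun u : W => u.1.2) _ (fun j => @cnt_col p j p2).
  by rewrite cU => /eqP; rewrite eqn_pmul2r // => /eqP.
have cI : #|I| = b.+1.
  have := @count_proj _ _ U (fun u : W => u.1.1) _ (fun j => @cnt_row p j p2).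
  by rewrite cU => /eqP; rewrite eqn_pmul2r // => /eqP.
pose NS := [set u : W | (u.1.1 \notin I) && (u.1.2 \notin J)].
have cNS : #|NS| = (m - b.+1) * (r - b.+1) * al.
  have -> : NS = setX (setX (~: I) (~: J)) setT.
    by apply/setP => u; rewrite !inE andbT.
  rewrite !cardsX cardsT card_ord.
  have h1 := cardsC I; have h2 := cardsC J.
  rewrite card_ord cI in h1; rewrite card_ord cJ in h2.
  have e1 : #|~: I| = m - b.+1 by move: h1; set c := #|~: I|; lia.
  have e2 : #|~: J| = r - b.+1 by move: h2; set c := #|~: J|; lia.
  by rewrite e1 e2.
have nearU : forall u, u \notin NS -> phis p u \in ball adj 2 x.
  move=> u; rewrite inE negb_and !negbK => h.
  have [w wU hw] : exists2 w, w \in U & (w.1.1 == u.1.1) || (w.1.2 == u.1.2).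
    case/orP: h; rewrite inE => /existsP [w /andP [wU /eqP e]]; exists w => //; by rewrite e eqxx ?orbT.
  case: (eqVneq w u) => [<-|wu]; first by apply: G1_ball2; move: wU; rewrite inE.
  apply: (@ball_step _ _ 1 _ (phis p w)); first by apply: G1_ball1; move: wU; rewrite inE.
  by rewrite phis_adj fWE wu.
have A3e : Gamma adj 3 x :&: Gamma adj 1 p = phis p @: NS.
  apply/eqP; rewrite eqEcard card_imset; last exact: phis_inj.
  rewrite cNS b2h // -mulnBr.
  have -> : (m - b.+1) * (r - b.+1) * al = (r - b.+1) * (al * (m - b.+1)) by ring.
  rewrite leqnn andbT; apply/subsetP => z /setIP [z3 zp].
  have [u e] := inG1 zp; rewrite e mem_img; apply/negPn/negP => /nearU.
  by rewrite -e (negbTE (G3_nb2 z3)).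
have i0I : i0 \notin I.
  apply/negP; rewrite inE => /existsP [w /andP [wU /eqP e]].
  have : phis p w \in M by rewrite eM /Rc in_setU1 mem_img inE e eqxx orbT.
  by move/distM; rewrite inE in wU; rewrite (G1_ball1 wU).
exists i0, J; split => //.
rewrite eM /Rc (@yimg_eq _ _ _ [set u | (u.1.1 == i0) && (u.1.2 \in J)]) //.
move=> u.
have -> : (u \in rowW i0) = (u.1.1 == i0) by rewrite inE.
have -> : (u \in [set u | (u.1.1 == i0) && (u.1.2 \in J)]) = (u.1.1 == i0) && (u.1.2 \in J).
  by rewrite inE.
case: (eqVneq u.1.1 i0) => [ui|]; rewrite ?andbF ?andbT ?andTb //.
apply/idP/idP => [h|uJ].
- apply/negPn/negP => uJ.
  have : phis p u \in phis p @: NS by rewrite mem_img inE ui (negbTE i0I) uJ.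
  rewrite -A3e => /setIP [/G3_nb2 h3 _].
  by move: h; rewrite GSE => /andP [h' _]; rewrite h' in h3.
- rewrite GSE; apply/andP; split.
  + by apply: nearU; rewrite inE uJ andbF.
  + by apply: distM; rewrite eM /Rc in_setU1 mem_img inE ui eqxx orbT.
Qed.


Lemma design_part : is_design 2 (al * (b + 1) + 1) (al + 1) 1
  (Gamma adj 2 x :&: M) (lines_on C (Gamma adj 2 x :&: M)).
Proof.
have [p pB] : exists p, p \in Gamma adj 2 x :&: M.
  by case: ex2 => p pM p2; exists p; rewrite in_setI p2 pM.
set B := Gamma adj 2 x :&: M.
have cBs : forall i0 (J : {set 'I_r}), #|J| = b.+1 ->
    #|[set u : W | (u.1.1 == i0) && (u.1.2 \in J)]| = b.+1 * al.
  move=> i0 J cJ.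
  have -> : [set u : W | (u.1.1 == i0) && (u.1.2 \in J)] = setX (setX [set i0] J) setT.
    by apply/setP => u; rewrite !inE andbT.
  by rewrite !cardsX cards1 cardsT card_ord cJ mul1n.
split.
  have [i0 [J [cJ eB]]] := atp pB.
  by rewrite /B eB card_yimg cBs //; nia.
split.
  move=> blk /imsetP [l]; rewrite inE => /andP [lC c2] ->.
  split; first exact: subsetIr.
  have [p' p'lB] : exists p', p' \in l :&: B.
    by apply/set0Pn; rewrite -card_gt0 (leq_trans _ c2).
  have [q qlB qp] : exists2 q, q \in l :&: B & q != p'.
    have : 0 < #|(l :&: B) :\ p'| by move: c2; rewrite (cardsD1 p') p'lB.
    by rewrite card_gt0 => /set0Pn [q]; rewrite in_setD1 => /andP [qp qlB]; exists q.
  have p'B : p' \in B by move: p'lB; rewrite in_setI => /andP [].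
  have p'l : p' \in l by move: p'lB; rewrite in_setI => /andP [].
  have [i0 [J [cJ eB]]] := atp p'B.
  have [j el] := line_at geom lC p'l.
  have e2 : l :&: B = p' |: phis p' @: (colW j :&: [set u : W | (u.1.1 == i0) && (u.1.2 \in J)]).
    rewrite /B eB el /Kc (@yimg_eq _ _ _ (colW j :&: [set u : W | (u.1.1 == i0) && (u.1.2 \in J)])) //.
    - by rewrite setU11.
    - move=> u; rewrite in_setU1 (negbTE (phis_neq p' u)) mem_img.
      by rewrite [in RHS]in_setI.
  move: qlB; rewrite e2 in_setU1 (negbTE qp) /= => /imsetP [u].
  rewrite !inE => /andP [/eqP uj /andP [_ uJ]] _.
  have -> : colW j :&: [set u : W | (u.1.1 == i0) && (u.1.2 \in J)] = rowW i0 :&: colW j.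
    apply/setP => w; rewrite !inE; case: (eqVneq w.1.2 j) => [->|]; rewrite ?andbF //.
    by rewrite -uj uJ andbT.
  by rewrite card_yimg card_rc addn1.
move=> S sSB /eqP /cards2P [q1 [q2 [q12 eS]]].
have q1B : q1 \in B by apply: (subsetP sSB); rewrite eS !inE eqxx.
have q2B : q2 \in B by apply: (subsetP sSB); rewrite eS !inE eqxx orbT.
have q1M : q1 \in M by move: q1B; rewrite in_setI => /andP [].
have q2M : q2 \in M by move: q2B; rewrite in_setI => /andP [].
have a12 : adj q1 q2 by apply: asmM.1.1.
have [l lC /andP [q1l q2l]] := line_through geom a12.
suff -> : [set blk in lines_on C B | S \subset blk] = [set l :&: B] by rewrite cards1.
apply/setP => blk; rewrite !inE; apply/andP/eqP => [[/imsetP [l']]|->].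
- rewrite inE => /andP [l'C _] -> sS.
  have q1l' : q1 \in l'.
    by move: (subsetP sS q1); rewrite eS in_set2 eqxx => /(_ isT); rewrite in_setI => /andP [].
  have q2l' : q2 \in l'.
    by move: (subsetP sS q2); rewrite eS in_set2 eqxx orbT => /(_ isT); rewrite in_setI => /andP [].
  by rewrite (line_uniq geom a12 l'C lC).
- have sS : S \subset l :&: B.
    have q1G : q1 \in Gamma adj 2 x by move: q1B; rewrite in_setI => /andP [].
    have q2G : q2 \in Gamma adj 2 x by move: q2B; rewrite in_setI => /andP [].
    by rewrite eS subUset !sub1set !in_setI q1l q2l q1G q2G q1M q2M.
  split => //; apply/imsetP; exists l => //.
  by rewrite inE lC; apply: leq_trans (subset_leq_card sS); rewrite eS cards2 q12.
Qed.

End DRG.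

End Local.

Lemma qint_sum b n : 1 < b -> qint b n = \sum_(i < n) b ^ i.
Proof.
move=> b2; rewrite /qint.
suff -> : b ^ n - 1 = (b - 1) * \sum_(i < n) b ^ i by rewrite mulKn // subn_gt0.
elim: n => [|n IH]; first by rewrite big_ord0 expn0 subnn muln0.
rewrite big_ord_recr /= mulnDr -IH expnS.
have : 0 < b ^ n by rewrite expn_gt0 (ltn_trans _ b2).
set X := b ^ n; nia.
Qed.

Lemma qint1 b : 1 < b -> qint b 1 = 1.
Proof. by move=> b2; rewrite qint_sum // big_ord1 expn0. Qed.

Lemma qint2 b : 1 < b -> qint b 2 = b.+1.
Proof. by move=> b2; rewrite qint_sum // big_ord_recr big_ord1 /= expn0 expn1 add1n. Qed.

Lemma qint_ge b D : 1 < b -> 2 <= D -> b.+1 <= qint b D.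
Proof.
move=> b2 D2; rewrite qint_sum // -(big_mkord xpredT (fun i => b ^ i)).
rewrite (big_cat_nat _ (n := 2)) //= -qint2 // qint_sum // -(big_mkord xpredT (fun i => b ^ i)).
exact: leq_addr.
Qed.

Theorem theorem28 (T : finType) (adj : rel T) (D b alpha beta : nat)
  (C : {set {set T}}) :
  2 <= b -> 1 <= alpha -> alpha <= b - 1 -> 3 <= D ->
  classical_parameters adj D b alpha beta ->
  geometric adj (qint b D * beta) C ->
  (exists m : nat, beta = alpha * m /\
     forall x : T, local_graph_iso adj x
       (clique_ext_adj (grid_adj m (qint b D)) alpha)) ->
  alpha * qint b D < beta ->
  forall (M : {set T}) (x : T),
    assembly adj C M -> dist_set_2 adj x M ->
    is_design 2 (alpha * (b + 1) + 1) (alpha + 1) 1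
      (Gamma adj 2 x :&: M) (lines_on C (Gamma adj 2 x :&: M)) /\
    (alpha + 1 %| b * (b + 1)).
Proof.
move=> b2 a1 ab D3 [bi [ci [[[sym irr] [_ [hb hc]]] [bif cif]]]] geo [m [em loc]] lt M x asm [ex2 dist].
set r := qint b D in geo loc lt bif.
have rb : b.+1 <= r by apply: qint_ge => //; apply: leq_trans D3.
have r2 : 1 < r by lia.
have rm : r < m by move: lt; rewrite em ltn_pmul2l.
have m2 : 1 < m by lia.
have loc' : forall y, exists phi : (('I_m * 'I_r) * 'I_alpha) -> T,
    injective phi /\ [set w | w in codom phi] = Gamma adj 1 y /\
    forall u v, adj (phi u) (phi v) = fW u v.
  exact: loc.
have [phis hphis] := fin_all_exists loc'.
rewrite em in geo.
have c2h : forall p, p \in Gamma adj 2 x -> #|Gamma adj 1 x :&: Gamma adj 1 p| = b.+1 * alpha.+1.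
  move=> p p2; rewrite (hc 2 x p) //; last by apply: leq_trans D3.
  by rewrite cif ?(leq_trans _ D3) // qint2 // qint1 // muln1 add1n.
have b2h : forall p, p \in Gamma adj 2 x ->
    #|Gamma adj 3 x :&: Gamma adj 1 p| = (r - b.+1) * (alpha * m - alpha * b.+1).
  move=> p p2; rewrite (hb 2 x p) //; last by apply: leq_trans D3.
  have := bif 2 (leq_trans (isT : 2 <= 3) D3); rewrite qint2 // em.
  have am : alpha * b.+1 <= alpha * m by rewrite leq_mul2l (ltnW (leq_ltn_trans rb rm)) orbT.
  by move=> h; apply/eqP; rewrite -eqz_nat h PoszM !subzn // (PoszM alpha).
have des := design_part sym irr m2 r2 a1 rm hphis geo asm dist ex2 c2h b2h.
split => //.
set L := lines_on C (Gamma adj 2 x :&: M) in des *.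
have rq : forall q, q \in Gamma adj 2 x :&: M -> #|[set blk in L | q \in blk]| = b.+1.
  move=> q qB; have := design_rep des qB.
  rewrite !addn1 /= mulnC => /eqP; rewrite eqn_pmul2l //.
  by move/eqP.
have tot := design_total des rq.
have h : (alpha + 1) %| #|L| * (alpha + 1) + b * (b + 1).
  have -> : #|L| * (alpha + 1) + b * (b + 1) = (alpha + 1) * ((b + 1) * (b + 1)).
    rewrite tot; ring.
  exact: dvdn_mulr.
by move: h; rewrite dvdn_addr // dvdn_mull.
Qed.
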